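(* Let $m\ge2$ and let $a_1,a_2,b_1,b_2,b_3,c_1,\dots,c_{2m}$ be real with $a_1>a_2$, $b_1,b_2,b_3$ pairwise distinct, $c_1>c_2>\dots>c_{2m}$, and $ma_1+ma_2=b_1+(m-1)b_2+mb_3+\sum_{i=1}^{2m}c_i$. Let $\langle\cdot,\cdot\rangle$ be the form on $\mathbb{R}^{2m}$ defined in the context (assumed well defined). Then $\langle\cdot,\cdot\rangle$ is sign-definite if and only if one of the following six systems holds: (1) $b_1>b_3>b_2$; $p^{31}_{m-1}>0>p^{31}_m$; $p^{32}_{2m-1}>0>p^{32}_{2m}$; $q_{i,2m-1-i}>0>q_{i,2m-i}$ for $i=1,\dots,m-1$. (2) $b_1>b_2>b_3$; $0>p^{31}_1$; $p^{32}_m>0>p^{32}_{m+1}$; $q_{i,2m-i}>0>q_{i,2m+1-i}$ for $i=1,\dots,m-1$; $0>q_{m,m+1}$. (3) $b_2>b_1>b_3$; $0>p^{31}_1$; $p^{32}_m>0>p^{32}_{m+1}$; $q_{i,2m+1-i}>0>q_{i+1,2m+1-i}$ for $i=1,\dots,m-1$; $q_{m,m+1}>0$. (4) $b_2>b_3>b_1$; $p^{31}_1>0>p^{31}_2$; $p^{32}_{m+1}>0>p^{32}_{m+2}$; $q_{i,2m+2-i}>0>q_{i+1,2m+2-i}$ for $i=2,\dots,m$. (5) $b_3>b_2>b_1$; $p^{31}_m>0>p^{31}_{m+1}$; $p^{32}_{2m}>0$; $q_{i,2m+1-i}>0>q_{i+1,2m+1-i}$ for $i=1,\dots,m-1$;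 $q_{m,m+1}>0$. (6) $b_3>b_1>b_2$; $p^{31}_m>0>p^{31}_{m+1}$; $p^{32}_{2m}>0$; $q_{i,2m-i}>0>q_{i,2m+1-i}$ for $i=1,\dots,m-1$; $0>q_{m,m+1}$. If $\epsilon\langle\cdot,\cdot\rangle$ is positive-definite for $\epsilon=\pm1$, then $\epsilon=\mathrm{sign}((b_1-b_2)(b_1-b_3))$. In each case, the inequalities between $b_1,b_2,b_3$ are implied by the other inequalities of that case.
   Context: Notation: $p_i^{jk}=c_i+b_j-a_k$, $q_{ij}=c_i+c_j+b_2+b_3-a_1-a_2$; empty products are $1$. ${\bf C}$ is the $2m\times2m$ lower-triangular matrix with $C_{11}=c_{2m}$, $C_{1+i,1+i}=c_{2m-i}$ ($1\le i\le m-1$), $C_{m+i,m+i}=c_{m+1-i}$ ($1\le i\le m$), $C_{1+i,1}=-\frac{\prod_{k=1}^i q_{k,2m-i}}{\prod_{k=2m+1-i}^{2m-1}(c_{2m-i}-c_k)}$ ($1\le i\le m-1$), $C_{m+i,1}=-p^{32}_{m+1-i}\frac{\prod_{k=m+1}^{m-1+i}q_{m+1-i,k}}{\prod_{k=m+2-i}^m(c_{m+1-i}-c_k)}$ ($1\le i\le m$), $C_{m+i,1+j}=(-1)^{m+1-j}p^{32}_{m+1-i}\frac{\prod_{k=m+1,k\ne2m-j}^{m-1+i}q_{m+1-i,k}\prod_{k=j+1,k\ne m+1-i}^m q_{k,2m-j}}{\prod_{k=m+2-i}^m(c_{m+1-i}-c_k)\prod_{k=m+1}^{2m-1-j}(c_k-c_{2m-j})}$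 ($1\le i\le m$, $1\le j\le m-1$), all other entries $0$. For $i=1,\dots,2m$, ${\bf v}_i$ is the eigenvector of ${\bf C}$ with eigenvalue $c_i$ whose first $2m-i$ coordinates vanish and whose $(2m+1-i)$-th coordinate is $1$. The form is defined by $\langle{\bf v}_i,{\bf v}_j\rangle=0$ ($i\ne j$) and $\langle{\bf v}_i,{\bf v}_i\rangle=\frac{\prod_{k=i+1}^{2m}(c_i-c_k)}{\prod_{k=1}^{i-1}(c_i-c_k)}\cdot\frac{\prod_{k=2m+1-i,k\ne i}^{2m}q_{ik}}{\prod_{k=1,k\ne i}^{2m-i}q_{ik}}$ times $p^{31}_i/p^{32}_i$ if $i\le m$ and times $p^{31}_ip^{32}_i$ if $i>m$; it is well defined when no denominator vanishes. Sign-definite means positive-definite or negative-definite. *)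

(* Defs.v *)
From HB Require Import structures.
From mathcomp Require Import all_boot all_order all_algebra.
Set Implicit Arguments. Unset Strict Implicit. Unset Printing Implicit Defensive.
Import Order.TTheory GRing.Theory Num.Theory.
Local Open Scope ring_scope.

(* All index conventions are 1-based on nat: c i for i = 1..2m.
   Every definition takes the full parameter list
   (m : nat) (a1 a2 b1 b2 b3 : R) (c : nat -> R). *)

Definition p31 (R : realFieldType) (m : nat) (a1 a2 b1 b2 b3 : R) (c : nat -> R)
  (i : nat) : R := c i + b3 - a1.
Definition p32 (R : realFieldType) (m : nat) (a1 a2 b1 b2 b3 : R) (c : nat -> R)
  (i : nat) : R := c i + b3 - a2.
Definition q (R : realFieldType) (m : nat) (a1 a2 b1 b2 b3 : R) (c : nat -> R)
  (i j : nat) : R := c i + c j + b2 + b3 - a1 - a2.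

(* Entry (r, s) (1-based) of the 2m x 2m lower-triangular matrix C. *)
Definition Centry (R : realFieldType) (m : nat) (a1 a2 b1 b2 b3 : R) (c : nat -> R)
  (r s : nat) : R :=
  let q := q m a1 a2 b1 b2 b3 c in
  let p32 := p32 m a1 a2 b1 b2 b3 c in
  if (r == s) then
    (if r == 1%N then c (2 * m)%N
     else if (2 <= r <= m)%N then c (2 * m - (r - 1))%N
     else if (m + 1 <= r <= 2 * m)%N then c (m + 1 - (r - m))%N
     else 0)
  else if (s == 1%N) && (2 <= r <= m)%N then
    let i := (r - 1)%N in
    - ((\prod_(1 <= k < i.+1) q k (2 * m - i)%N) /
       (\prod_((2 * m + 1 - i)%N <= k < (2 * m)%N) (c (2 * m - i)%N - c k)))
  else if (s == 1%N) && (m + 1 <= r <= 2 * m)%N then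
    let i := (r - m)%N in
    - (p32 (m + 1 - i)%N *
       ((\prod_((m + 1)%N <= k < (m + i)%N) q (m + 1 - i)%N k) /
        (\prod_((m + 2 - i)%N <= k < m.+1) (c (m + 1 - i)%N - c k))))
  else if (m + 1 <= r <= 2 * m)%N && (2 <= s <= m)%N then
    let i := (r - m)%N in
    let j := (s - 1)%N in
    (-1) ^+ (m + 1 - j)%N * p32 (m + 1 - i)%N *
    ((\prod_((m + 1)%N <= k < (m + i)%N | k != (2 * m - j)%N) q (m + 1 - i)%N k) *
     (\prod_((j + 1)%N <= k < m.+1 | k != (m + 1 - i)%N) q k (2 * m - j)%N) /
     ((\prod_((m + 2 - i)%N <= k < m.+1) (c (m + 1 - i)%N - c k)) *
      (\prod_((m + 1)%N <= k < (2 * m - j)%N) (c k - c (2 * m - j)%N))))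
  else 0.

Definition Cmat (R : realFieldType) (m : nat) (a1 a2 b1 b2 b3 : R) (c : nat -> R)
  : 'M[R]_(2 * m) := \matrix_(r, s) Centry m a1 a2 b1 b2 b3 c r.+1 s.+1.

(* Prescribed value <v_i, v_i>. *)
Definition dval (R : realFieldType) (m : nat) (a1 a2 b1 b2 b3 : R) (c : nat -> R)
  (i : nat) : R :=
  let q := q m a1 a2 b1 b2 b3 c in
  (\prod_((i + 1)%N <= k < (2 * m).+1) (c i - c k)) /
  (\prod_(1 <= k < i) (c i - c k)) *
  ((\prod_((2 * m + 1 - i)%N <= k < (2 * m).+1 | k != i) q i k) /
   (\prod_(1 <= k < (2 * m - i).+1 | k != i) q i k)) *
  (if (i <= m)%N then p31 m a1 a2 b1 b2 b3 c i / p32 m a1 a2 b1 b2 b3 c i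
   else p31 m a1 a2 b1 b2 b3 c i * p32 m a1 a2 b1 b2 b3 c i).

(* The order conditions bordk and the remaining conditions restk of case (k). *)
Definition bord1 (R : realFieldType) (m : nat) (a1 a2 b1 b2 b3 : R) (c : nat -> R) :=
  b1 > b3 /\ b3 > b2.
Definition rest1 (R : realFieldType) (m : nat) (a1 a2 b1 b2 b3 : R) (c : nat -> R) :=
  let p31 := p31 m a1 a2 b1 b2 b3 c in let p32 := p32 m a1 a2 b1 b2 b3 c in
  let q := q m a1 a2 b1 b2 b3 c in
  [/\ p31 (m - 1)%N > 0, 0 > p31 m, p32 (2 * m - 1)%N > 0, 0 > p32 (2 * m)%N &
   forall i, (1 <= i <= m - 1)%N ->
     q i (2 * m - 1 - i)%N > 0 /\ 0 > q i (2 * m - i)%N].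
Definition bord2 (R : realFieldType) (m : nat) (a1 a2 b1 b2 b3 : R) (c : nat -> R) :=
  b1 > b2 /\ b2 > b3.
Definition rest2 (R : realFieldType) (m : nat) (a1 a2 b1 b2 b3 : R) (c : nat -> R) :=
  let p31 := p31 m a1 a2 b1 b2 b3 c in let p32 := p32 m a1 a2 b1 b2 b3 c in
  let q := q m a1 a2 b1 b2 b3 c in
  [/\ 0 > p31 1%N, p32 m > 0, 0 > p32 (m + 1)%N,
   (forall i, (1 <= i <= m - 1)%N ->
     q i (2 * m - i)%N > 0 /\ 0 > q i (2 * m + 1 - i)%N) &
   0 > q m (m + 1)%N].
Definition bord3 (R : realFieldType) (m : nat) (a1 a2 b1 b2 b3 : R) (c : nat -> R) :=
  b2 > b1 /\ b1 > b3.
Definition rest3 (R : realFieldType) (m : nat) (a1 a2 b1 b2 b3 : R) (c : nat -> R) :=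
  let p31 := p31 m a1 a2 b1 b2 b3 c in let p32 := p32 m a1 a2 b1 b2 b3 c in
  let q := q m a1 a2 b1 b2 b3 c in
  [/\ 0 > p31 1%N, p32 m > 0, 0 > p32 (m + 1)%N,
   (forall i, (1 <= i <= m - 1)%N ->
     q i (2 * m + 1 - i)%N > 0 /\ 0 > q (i + 1)%N (2 * m + 1 - i)%N) &
   q m (m + 1)%N > 0].
Definition bord4 (R : realFieldType) (m : nat) (a1 a2 b1 b2 b3 : R) (c : nat -> R) :=
  b2 > b3 /\ b3 > b1.
Definition rest4 (R : realFieldType) (m : nat) (a1 a2 b1 b2 b3 : R) (c : nat -> R) :=
  let p31 := p31 m a1 a2 b1 b2 b3 c in let p32 := p32 m a1 a2 b1 b2 b3 c in
  let q := q m a1 a2 b1 b2 b3 c in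
  [/\ p31 1%N > 0, 0 > p31 2%N, p32 (m + 1)%N > 0, 0 > p32 (m + 2)%N &
   forall i, (2 <= i <= m)%N ->
     q i (2 * m + 2 - i)%N > 0 /\ 0 > q (i + 1)%N (2 * m + 2 - i)%N].
Definition bord5 (R : realFieldType) (m : nat) (a1 a2 b1 b2 b3 : R) (c : nat -> R) :=
  b3 > b2 /\ b2 > b1.
Definition rest5 (R : realFieldType) (m : nat) (a1 a2 b1 b2 b3 : R) (c : nat -> R) :=
  let p31 := p31 m a1 a2 b1 b2 b3 c in let p32 := p32 m a1 a2 b1 b2 b3 c in
  let q := q m a1 a2 b1 b2 b3 c in
  [/\ p31 m > 0, 0 > p31 (m + 1)%N, p32 (2 * m)%N > 0,
   (forall i, (1 <= i <= m - 1)%N ->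
     q i (2 * m + 1 - i)%N > 0 /\ 0 > q (i + 1)%N (2 * m + 1 - i)%N) &
   q m (m + 1)%N > 0].
Definition bord6 (R : realFieldType) (m : nat) (a1 a2 b1 b2 b3 : R) (c : nat -> R) :=
  b3 > b1 /\ b1 > b2.
Definition rest6 (R : realFieldType) (m : nat) (a1 a2 b1 b2 b3 : R) (c : nat -> R) :=
  let p31 := p31 m a1 a2 b1 b2 b3 c in let p32 := p32 m a1 a2 b1 b2 b3 c in
  let q := q m a1 a2 b1 b2 b3 c in
  [/\ p31 m > 0, 0 > p31 (m + 1)%N, p32 (2 * m)%N > 0,
   (forall i, (1 <= i <= m - 1)%N ->
     q i (2 * m - i)%N > 0 /\ 0 > q i (2 * m + 1 - i)%N) &
   0 > q m (m + 1)%N].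

Definition bform (R : realFieldType) (n : nat) (G : 'M[R]_n) (x y : 'cV[R]_n) : R :=
  (x^T *m G *m y) 0 0.

Definition pos_definite (R : realFieldType) (n : nat) (G : 'M[R]_n) : Prop :=
  forall x : 'cV[R]_n, x != 0 -> 0 < bform G x x.
Definition neg_definite (R : realFieldType) (n : nat) (G : 'M[R]_n) : Prop :=
  forall x : 'cV[R]_n, x != 0 -> bform G x x < 0.
Definition sign_definite (R : realFieldType) (n : nat) (G : 'M[R]_n) : Prop :=
  pos_definite G \/ neg_definite G.

(* Main.v *)
Require Import Defs.
From HB Require Import structures.
From mathcomp Require Import all_boot all_order all_algebra.
From mathcomp Require Import zify ring lra.
Import Order.TTheory GRing.Theory Num.Theory.
Local Open Scope ring_scope.

Lemma thresh (P : nat -> bool) n :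
  (forall k k', (1 <= k)%N -> (k <= k')%N -> (k' <= n)%N -> P k' -> P k) ->
  forall k, (1 <= k <= n)%N -> P k = (k <= \sum_(1 <= j < n.+1) P j)%N.
Proof.
elim: n => [|n IH] Hd k /andP[k1 kn]; first by lia.
rewrite big_nat_recr //=.
case Pn: (P n.+1).
- have allP : forall j, (1 <= j <= n.+1)%N -> P j.
    by move=> j /andP[j1 jn]; apply: (Hd j n.+1).
  rewrite (eq_big_nat _ _ (F2 := fun _ => 1%N)); last first.
    by move=> j /andP[j1 jn]; rewrite allP // j1 /=; lia.
  rewrite sum_nat_const_nat allP ?k1 //=; lia.
- rewrite addn0.
  have Hd' : forall k k', (1 <= k)%N -> (k <= k')%N -> (k' <= n)%N -> P k' -> P k.
    by move=> k0 k1' a b c; apply: Hd => //; lia.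
  case: (ltnP n k) => kn'.
  + have -> : k = n.+1 by lia.
    rewrite Pn.
    have : (\sum_(1 <= j < n.+1) P j <= n)%N.
      apply: leq_trans (_ : \sum_(1 <= j < n.+1) 1 <= _)%N.
        by apply: leq_sum => j _; case: (P j).
      by rewrite sum_nat_const_nat; lia.
    lia.
  + by apply: IH => //; rewrite k1.
Qed.

Lemma sum_le_card (P : nat -> bool) a b :
  (\sum_(a <= j < b) P j <= b - a)%N.
Proof.
apply: leq_trans (_ : \sum_(a <= j < b) 1 <= _)%N.
  by apply: leq_sum => j _; case: (P j).
by rewrite sum_nat_const_nat muln1.
Qed.
Lemma sumD1n (F : nat -> nat) n i : (1 <= i <= n)%N ->
  (\sum_(1 <= k < n.+1) F k = F i + \sum_(1 <= k < n.+1 | k != i) F k)%N.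
Proof.
move=> hi; rewrite (bigD1_seq i) //=; last exact: iota_uniq.
by rewrite mem_iota; lia.
Qed.

Lemma sum_gt n t : (\sum_(1 <= k < n.+1) (t < k : nat) = n - t)%N.
Proof.
elim: n => [|n IH]; first by rewrite big_geq.
rewrite big_nat_recr //= IH; lia.
Qed.

Lemma count_gt n t i : (1 <= i <= n)%N ->
  (\sum_(1 <= k < n.+1 | k != i) (t < k : nat) = (n - t) - (t < i))%N.
Proof.
move=> hi; have := @sumD1n (fun k => (t < k : nat)) n i hi; rewrite sum_gt; lia.
Qed.

Section Main.
Variable R : realFieldType.
Variables (m : nat) (a1 a2 b1 b2 b3 : R) (c : nat -> R).
Hypothesis m2 : (2 <= m)%N.
Hypothesis ha : a2 < a1.
Hypothesis hc : forall i, (1 <= i < 2 * m)%N -> c i.+1 < c i.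

Local Notation Q := (q m a1 a2 b1 b2 b3 c).
Local Notation P31 := (p31 m a1 a2 b1 b2 b3 c).
Local Notation P32 := (p32 m a1 a2 b1 b2 b3 c).

Lemma c_lt i j : (1 <= i)%N -> (i < j)%N -> (j <= 2 * m)%N -> c j < c i.
Proof.
move=> i1; elim: j => [|j IH] //= ij j2.
case: (ltnP i j) => h.
  apply: lt_trans (IH h _) ; last lia.
  by apply: hc; lia.
have -> : i = j by lia.
by apply: hc; lia.
Qed.

Lemma c_le i j : (1 <= i)%N -> (i <= j)%N -> (j <= 2 * m)%N -> c j <= c i.
Proof.
move=> i1 ij j2; case: (ltnP i j) => h.
  by apply: ltW; apply: c_lt.
by have -> : j = i by lia.
Qed.

Lemma qC i k : Q i k = Q k i.
Proof. rewrite /q; ring. Qed.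

Lemma q_le i i' k k' : (1 <= i)%N -> (i <= i')%N -> (i' <= 2 * m)%N ->
  (1 <= k)%N -> (k <= k')%N -> (k' <= 2 * m)%N -> Q i' k' <= Q i k.
Proof.
move=> *; rewrite /q.
have := c_le i i' _ _ _; have := c_le k k' _ _ _.
move=> h1 h2; have := h1 ltac:(done) ltac:(done) ltac:(done);
  have := h2 ltac:(done) ltac:(done) ltac:(done); lra.
Qed.

Lemma p31_le i i' : (1 <= i)%N -> (i <= i')%N -> (i' <= 2 * m)%N -> P31 i' <= P31 i.
Proof. move=> h1 h2 h3; rewrite /p31; have := @c_le i i' h1 h2 h3; lra. Qed.
Lemma p32_le i i' : (1 <= i)%N -> (i <= i')%N -> (i' <= 2 * m)%N -> P32 i' <= P32 i.
Proof. move=> h1 h2 h3; rewrite /p32; have := @c_le i i' h1 h2 h3; lra. Qed.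
Lemma p31_lt i : P31 i < P32 i.
Proof. rewrite /p31 /p32. have := ha. lra. Qed.

Definition Tn i := (\sum_(1 <= k < (2 * m).+1) ((0 < Q i k)%R : nat))%N.
Definition Negn i := (\sum_(1 <= k < (2 * m).+1 | k != i) ((Q i k < 0)%R : nat))%N.
Definition P1n := (\sum_(1 <= k < (2 * m).+1) ((0 < P31 k)%R : nat))%N.
Definition P2n := (\sum_(1 <= k < (2 * m).+1) ((0 < P32 k)%R : nat))%N.

Lemma T_iff i k : (1 <= i <= 2 * m)%N -> (1 <= k <= 2 * m)%N ->
  (0 < Q i k) = (k <= Tn i)%N.
Proof.
move=> hi hk; rewrite /Tn; apply: (@thresh (fun k => 0 < Q i k) (2 * m)) => //.
move=> j j' j1 jj' j'2 h; apply: lt_le_trans h _; apply: q_le => //; lia.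
Qed.
Arguments T_iff [i k].

Lemma P1_iff k : (1 <= k <= 2 * m)%N -> (0 < P31 k) = (k <= P1n)%N.
Proof.
move=> hk; rewrite /P1n; apply: (@thresh (fun k => 0 < P31 k) (2 * m)) => //.
move=> j j' j1 jj' j'2 h; apply: lt_le_trans h _; apply: p31_le => //; lia.
Qed.
Arguments P1_iff [k].

Lemma P2_iff k : (1 <= k <= 2 * m)%N -> (0 < P32 k) = (k <= P2n)%N.
Proof.
move=> hk; rewrite /P2n; apply: (@thresh (fun k => 0 < P32 k) (2 * m)) => //.
move=> j j' j1 jj' j'2 h; apply: lt_le_trans h _; apply: p32_le => //; lia.
Qed.
Arguments P2_iff [k].

Lemma T_le i : (Tn i <= 2 * m)%N.
Proof. by have := sum_le_card (fun k => 0 < Q i k) 1 (2 * m).+1; rewrite /Tn; lia. Qed.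
Lemma P1_le : (P1n <= 2 * m)%N.
Proof. by have := sum_le_card (fun k => 0 < P31 k) 1 (2 * m).+1; rewrite /P1n; lia. Qed.
Lemma P2_le : (P2n <= 2 * m)%N.
Proof. by have := sum_le_card (fun k => 0 < P32 k) 1 (2 * m).+1; rewrite /P2n; lia. Qed.

Lemma P12 : (P1n <= P2n)%N.
Proof.
rewrite /P1n /P2n; apply: leq_sum => k _.
case: (boolP (0 < P31 k)) => //= h.
by rewrite (lt_trans h (p31_lt k)).
Qed.

Lemma T_sym i k : (1 <= i <= 2 * m)%N -> (1 <= k <= 2 * m)%N ->
  (k <= Tn i)%N = (i <= Tn k)%N.
Proof. by move=> hi hk; rewrite -T_iff // -T_iff // qC. Qed.
Arguments T_sym [i k].

Definition NZ := forall i k, (1 <= i <= 2 * m)%N -> (1 <= k <= 2 * m)%N -> k != i -> Q i k != 0.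

Lemma Neg_T i : NZ -> (1 <= i <= 2 * m)%N ->
  (Negn i + Tn i = 2 * m - 1 + (i <= Tn i))%N.
Proof.
move=> nz hi.
have h1 := @sumD1n (fun k => ((0 < Q i k)%R : nat)) (2 * m) i hi.
rewrite -(T_iff hi hi) /Tn h1 /Negn.
have : (\sum_(1 <= k < (2 * m).+1 | k != i) ((Q i k < 0)%R : nat) +
        \sum_(1 <= k < (2 * m).+1 | k != i) ((0 < Q i k)%R : nat) =
        \sum_(1 <= k < (2 * m).+1 | k != i) 1)%N.
  rewrite -big_split /= big_nat_cond [in RHS]big_nat_cond.
  apply: eq_bigr => k /andP[hk ki].
  have := nz i k hi hk ki.
  by case: ltgtP.
have h2 := @sumD1n (fun k => 1%N) (2 * m) i hi.
rewrite sum_nat_const_nat in h2.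
lia.
Qed.
Arguments Neg_T [i].


Lemma T_mono i : (1 <= i)%N -> (i < 2 * m)%N -> (Tn i.+1 <= Tn i)%N.
Proof.
move=> i1 i2; case: (posnP (Tn i.+1)) => [->//|t0].
have hk : (1 <= Tn i.+1 <= 2 * m)%N by rewrite t0 T_le.
have hi1 : (1 <= i.+1 <= 2 * m)%N by lia.
have hi : (1 <= i <= 2 * m)%N by lia.
have := (@T_iff i.+1 (Tn i.+1) hi1 hk); rewrite leqnn => h.
rewrite -(T_iff hi hk); apply: lt_le_trans (_ : 0 < Q i.+1 (Tn i.+1)) _.
  by rewrite h.
by apply: q_le => //; lia.
Qed.

Definition nn i := ((P1n < i) + (P2n < i))%N.
Definition En i := ((i - 1) + Negn i + (P31 i < 0)%R + (P32 i < 0)%R)%N.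

Definition NZp := forall i, (1 <= i <= 2 * m)%N -> P31 i != 0 /\ P32 i != 0.

Lemma n31 i : (1 <= i <= 2 * m)%N -> P31 i != 0 -> (P31 i < 0) = (P1n < i)%N.
Proof.
move=> hi h; rewrite ltnNge -P1_iff //.
by case: ltgtP h.
Qed.
Arguments n31 [i].
Lemma n32 i : (1 <= i <= 2 * m)%N -> P32 i != 0 -> (P32 i < 0) = (P2n < i)%N.
Proof.
move=> hi h; rewrite ltnNge -P2_iff //.
by case: ltgtP h.
Qed.
Arguments n32 [i].

Lemma En_nn i : NZp -> (1 <= i <= 2 * m)%N -> En i = ((i - 1) + Negn i + nn i)%N.
Proof.
move=> nzp hi; have [h1 h2] := nzp i hi.
by rewrite /En /nn (n31 hi h1) (n32 hi h2) addnA.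
Qed.
Arguments En_nn [i].

Lemma odd_eq_mod x y : odd x = odd y -> (x %% 2 = y %% 2)%N.
Proof. by move=> h; rewrite !modn2 h. Qed.

Lemma Neg_mono i : NZ -> (1 <= i)%N -> (i < 2 * m)%N -> (Negn i <= Negn i.+1)%N.
Proof.
move=> nz i1 i2.
have hi1 : (1 <= i.+1 <= 2 * m)%N by lia.
have hi : (1 <= i <= 2 * m)%N by lia.
have := Neg_T nz hi; have := Neg_T nz hi1; have := @T_mono i i1 i2.
have := T_sym hi hi1; have := T_le i; have := T_le i.+1.
lia.
Qed.

Section Inv.
Hypothesis nz : NZ.
Hypothesis nzp : NZp.
Hypothesis par : forall i, (1 <= i <= 2 * m)%N -> odd (En i) = odd (En 1).

Lemma step i : (1 <= i)%N -> (i < 2 * m)%N ->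
  (Negn i + nn i + 1 <= Negn i.+1 + nn i.+1)%N.
Proof.
move=> i1 i2.
have hi1 : (1 <= i.+1 <= 2 * m)%N by lia.
have hi : (1 <= i <= 2 * m)%N by lia.
have p1 := par i hi; have p2 := par i.+1 hi1.
rewrite -p1 in p2; move/odd_eq_mod: p2.
rewrite !En_nn //.
have := @Neg_mono i nz i1 i2; rewrite /nn; lia.
Qed.

Lemma steps i j : (1 <= i)%N -> (i <= j)%N -> (j <= 2 * m)%N ->
  (Negn i + nn i + (j - i) <= Negn j + nn j)%N.
Proof.
move=> i1; elim: j => [|j IH] ij j2; first lia.
case: (ltnP i j.+1) => h; last first.
  have e : j.+1 = i by lia.
  by rewrite e subnn addn0.
have := IH ltac:(lia) ltac:(lia); have := @step j ltac:(lia) ltac:(lia).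
lia.
Qed.

Lemma nn_le i : (nn i <= 2)%N.
Proof. rewrite /nn; lia. Qed.

Lemma upper : (Negn (2 * m) + nn (2 * m) <= 2 * m + Negn 1 + nn 1)%N.
Proof.
have h1 : (1 <= 1 <= 2 * m)%N by lia.
have h2 : (1 <= 2 * m <= 2 * m)%N by lia.
have := Neg_T nz h1; have := Neg_T nz h2; have := T_sym h1 h2.
have := T_le 1; have := T_le (2 * m); have := nn_le (2 * m); have := nn_le 1.
lia.
Qed.

Lemma inv i : (1 <= i <= 2 * m)%N -> (Negn i + nn i = Negn 1 + nn 1 + i - 1)%N.
Proof.
move=> /andP[i1 i2].
have s1 := @steps 1 i (leqnn 1) i1 i2.
have s2 := @steps i (2 * m) i1 i2 (leqnn _).
have s3 := @steps 1 (2 * m) (leqnn 1) ltac:(lia) (leqnn _).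
have h2 : (1 <= 2 * m <= 2 * m)%N by lia.
have h1 : (1 <= 1 <= 2 * m)%N by lia.
have p := par (2 * m) h2; rewrite (En_nn nzp h2) (En_nn nzp h1) in p; move/odd_eq_mod: p => p.
have := upper; lia.
Qed.

Lemma T_symP i k : (1 <= i <= 2 * m)%N -> (1 <= k <= 2 * m)%N ->
  (k <= Tn i)%N <-> (i <= Tn k)%N.
Proof. by move=> hi hk; rewrite (T_sym hi hk). Qed.
Arguments T_symP [i k].

Lemma facts i : (1 <= i <= 2 * m)%N ->
  [/\ (Negn i + Tn i = 2 * m - 1 + (i <= Tn i))%N,
      (Negn i + nn i = Negn 1 + nn 1 + i - 1)%N,
      (Tn i <= 2 * m)%N & nn i = ((P1n < i) + (P2n < i))%N].
Proof. by move=> hi; split; [exact: Neg_T|exact: inv|exact: T_le|]. Qed.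





Definition X := (Negn 1 + nn 1)%N.

Lemma Tfact i : (1 <= i <= 2 * m)%N -> (Tn i + X + i = 2 * m + nn i + (i <= Tn i))%N.
Proof.
move=> hi; have := Neg_T nz hi; have := @inv i hi; rewrite /X; lia.
Qed.

Lemma endf : (Negn 1 = 0 -> Negn (2 * m) <= 2 * m - 2)%N /\
             (0 < Negn 1 -> Negn (2 * m) = 2 * m - 1)%N.
Proof.
have h1 : (1 <= 1 <= 2 * m)%N by lia.
have h2 : (1 <= 2 * m <= 2 * m)%N by lia.
have := Neg_T nz h1; have := Neg_T nz h2; have := T_symP h1 h2.
have := T_le 1; have := T_le (2 * m).
lia.
Qed.

Lemma endg : (Negn (2 * m) + nn (2 * m) = X + 2 * m - 1)%N.
Proof. by have := @inv (2 * m) ltac:(lia); rewrite /X. Qed.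

Local Open Scope nat_scope.
Definition Cls :=
  ([/\ Negn 1 = 2, P1n = m - 1 & P2n = 2 * m - 1]%N \/
   [/\ Negn 1 = 1, P1n = 0 & P2n = m]%N \/
   [/\ Negn 1 = 0, P1n = 0 & P2n = m]%N \/
   [/\ Negn 1 = 0, P1n = 1 & P2n = m + 1]%N \/
   [/\ Negn 1 = 0, P1n = m & P2n = 2 * m]%N \/
   [/\ Negn 1 = 1, P1n = m & P2n = 2 * m]%N).

Ltac tf i := have := @Tfact i ltac:(lia).
Ltac ts i k := have := @T_symP i k ltac:(lia) ltac:(lia).

Lemma classify : Cls.
Proof.
rewrite /Cls.
have [e1 e2] := endf; have e3 := endg.
have p12 := P12; have p2 := P2_le.
have x1 : X = (Negn 1 + nn 1)%N by [].
case: (posnP P1n) => h1.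
-
  have n1 : nn 1 = 1%N + (P2n < 1)%N by rewrite /nn h1.
  case: (eqVneq P2n 0) => h2.
    have : nn (2 * m) = 2%N by rewrite /nn h1 h2; lia.
    lia.
  case: (eqVneq P2n (2 * m)) => h3.
    have : nn (2 * m) = 1%N by rewrite /nn h1 h3; lia.
    lia.
  have n2 : nn (2 * m) = 2%N by rewrite /nn; lia.
  have n1' : nn 1 = 1%N by rewrite n1; lia.
  have hN : (Negn 1 <= 1)%N by lia.
  case: (ltngtP P2n m) => hP; last first.
    have [hn|hn] : (Negn 1 = 0 \/ Negn 1 = 1)%N by lia.
    + by right; right; left; split.
    + by right; left; split.
  + exfalso.
    have nm1 : nn (m + 1) = 1%N by rewrite /nn; lia.
    have [hn|hn] : (Negn 1 = 0 \/ 0 < Negn 1)%N by lia.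
    * have nm : nn m = 1%N by rewrite /nn; lia.
      tf m; tf (m + 1); ts m (m + 1); lia.
    * have nm : nn (m - 1) = 1%N by rewrite /nn; lia.
      tf (m - 1); tf (m + 1); ts (m - 1) (m + 1); lia.
  +
    exfalso.
    have nm : nn m = 2%N by rewrite /nn; lia.
    have [hn|hn] : (Negn 1 = 0 \/ 0 < Negn 1)%N by lia.
    * have nm2 : nn (m + 2) = 2%N by rewrite /nn; lia.
      tf m; tf (m + 2); ts m (m + 2); lia.
    * have nm1 : nn (m + 1) = 2%N by rewrite /nn; lia.
      tf m; tf (m + 1); ts m (m + 1); lia.
- have n1 : nn 1 = 0%N by rewrite /nn; lia.
  case: (eqVneq P2n (2 * m)) => h3.
  + case: (eqVneq P1n (2 * m)) => h4.
      have : nn (2 * m) = 0%N by rewrite /nn h3 h4; lia.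
      lia.
    have n2 : nn (2 * m) = 1%N by rewrite /nn; lia.
    have hN : (Negn 1 <= 1)%N by lia.
    case: (ltngtP P1n m) => hP; last first.
      have [hn|hn] : (Negn 1 = 0 \/ Negn 1 = 1)%N by lia.
      + by do 4 right; left; split.
      + by do 5 right; split.
    * exfalso.
      have nm1 : nn (m + 1) = 0%N by rewrite /nn; lia.
      have [hn|hn] : (Negn 1 = 0 \/ 0 < Negn 1)%N by lia.
      -- have nm : nn m = 0%N by rewrite /nn; lia.
         tf m; tf (m + 1); ts m (m + 1); lia.
      -- have nm : nn (m - 1) = 0%N by rewrite /nn; lia.
         tf (m - 1); tf (m + 1); ts (m - 1) (m + 1); lia.
    * exfalso.
      have nm : nn m = 1%N by rewrite /nn; lia.
      have [hn|hn] : (Negn 1 = 0 \/ 0 < Negn 1)%N by lia.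
      -- have nm2 : nn (m + 2) = 1%N by rewrite /nn; lia.
         tf m; tf (m + 2); ts m (m + 2); lia.
      -- have nm1 : nn (m + 1) = 1%N by rewrite /nn; lia.
         tf m; tf (m + 1); ts m (m + 1); lia.
  + have n2 : nn (2 * m) = 2%N by rewrite /nn; lia.
    have [hn|hn] : (Negn 1 = 0 \/ 0 < Negn 1)%N by lia.
    *
      do 3 right; left.
      have hP1 : P1n = 1%N.
        apply/eqP; apply/negPn/negP => hne; exfalso.
        have n2' : nn 2 = 0%N by rewrite /nn; lia.
        tf 2; tf (2 * m); ts 2 (2 * m); lia.
      have hP2 : P2n = (m + 1)%N.
        case: (ltngtP P2n (m + 1)) => hP //; exfalso.
        -- have a : nn (m + 1) = 2%N by rewrite /nn; lia.
           have b : nn (m + 2) = 2%N by rewrite /nn; lia.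
           tf (m + 1); tf (m + 2); ts (m + 1) (m + 2); lia.
        -- have a : nn m = 1%N by rewrite /nn; lia.
           have b : nn (m + 2) = 1%N by rewrite /nn; lia.
           tf m; tf (m + 2); ts m (m + 2); lia.
      by split.
    * have hN : Negn 1 = 2%N by lia.
      left.
      have hP1 : (P1n <= m - 1)%N.
        rewrite leqNgt; apply/negP => hne; exfalso.
        have a : nn (m - 1) = 0%N by rewrite /nn; lia.
        have b : nn m = 0%N by rewrite /nn; lia.
        tf (m - 1); tf m; ts (m - 1) m; lia.
      have hP2 : P2n = (2 * m - 1)%N.
        apply/eqP; apply/negPn/negP => hne; exfalso.
        have a : nn (2 * m - 1) = 2%N by rewrite /nn; lia.
        tf 1; tf (2 * m - 1); ts 1 (2 * m - 1); lia.
      have hP1' : P1n = (m - 1)%N.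
        apply/eqP; apply/negPn/negP => hne; exfalso.
        have a : nn (m - 1) = 1%N by rewrite /nn; lia.
        have b : nn (m + 1) = 1%N by rewrite /nn; lia.
        tf (m - 1); tf (m + 1); ts (m - 1) (m + 1); lia.
      by split.
Qed.
Local Open Scope ring_scope.


Lemma qpos i k : (1 <= i <= 2 * m)%N -> (1 <= k <= 2 * m)%N ->
  (k <= Tn i)%N -> 0 < Q i k.
Proof. by move=> hi hk; rewrite (T_iff hi hk). Qed.

Lemma qneg i k : (1 <= i <= 2 * m)%N -> (1 <= k <= 2 * m)%N -> k <> i ->
  (Tn i < k)%N -> Q i k < 0.
Proof.
move=> hi hk /eqP ki; rewrite ltnNge -(T_iff hi hk).
have := nz i k hi hk ki; case: ltgtP => //.
Qed.

Lemma p1pos k : (1 <= k <= 2 * m)%N -> (k <= P1n)%N -> 0 < P31 k.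
Proof. by move=> hk; rewrite (P1_iff hk). Qed.
Lemma p2pos k : (1 <= k <= 2 * m)%N -> (k <= P2n)%N -> 0 < P32 k.
Proof. by move=> hk; rewrite (P2_iff hk). Qed.
Lemma p1neg k : (1 <= k <= 2 * m)%N -> (P1n < k)%N -> P31 k < 0.
Proof. by move=> hk; rewrite (n31 hk (proj1 (nzp k hk))). Qed.
Lemma p2neg k : (1 <= k <= 2 * m)%N -> (P2n < k)%N -> P32 k < 0.
Proof. by move=> hk; rewrite (n32 hk (proj2 (nzp k hk))). Qed.

Lemma all_rest :
  rest1 m a1 a2 b1 b2 b3 c \/ rest2 m a1 a2 b1 b2 b3 c \/ rest3 m a1 a2 b1 b2 b3 c \/
  rest4 m a1 a2 b1 b2 b3 c \/ rest5 m a1 a2 b1 b2 b3 c \/ rest6 m a1 a2 b1 b2 b3 c.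
Proof.
have x1 : X = (Negn 1 + nn 1)%N by [].
case: classify => [[h0 h1 h2]|[[h0 h1 h2]|[[h0 h1 h2]|[[h0 h1 h2]|[[h0 h1 h2]|[h0 h1 h2]]]]]].
- left; rewrite /rest1 /=; split.
  + by apply: p1pos; lia.
  + by apply: p1neg; lia.
  + by apply: p2pos; lia.
  + by apply: p2neg; lia.
  + move=> i hi; have n1 : (nn 1 = 0)%N by rewrite /nn; lia.
    have ni : (nn i = 0)%N by rewrite /nn; lia.
    have := @Tfact i ltac:(lia) => ti.
    split; [apply: qpos|apply: qneg]; lia.
- right; left; rewrite /rest2 /=; split.
  + by apply: p1neg; lia.
  + by apply: p2pos; lia.
  + by apply: p2neg; lia.
  + move=> i hi; have n1 : (nn 1 = 1)%N by rewrite /nn; lia.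
    have ni : (nn i = 1)%N by rewrite /nn; lia.
    have := @Tfact i ltac:(lia) => ti.
    split; [apply: qpos|apply: qneg]; lia.
  + have n1 : (nn 1 = 1)%N by rewrite /nn; lia.
    have ni : (nn m = 1)%N by rewrite /nn; lia.
    have := @Tfact m ltac:(lia) => ti.
    apply: qneg; lia.
- right; right; left; rewrite /rest3 /=; split.
  + by apply: p1neg; lia.
  + by apply: p2pos; lia.
  + by apply: p2neg; lia.
  + move=> i hi; have n1 : (nn 1 = 1)%N by rewrite /nn; lia.
    have ni : (nn i = 1)%N by rewrite /nn; lia.
    have ni' : (nn (i + 1) = 1)%N by rewrite /nn; lia.
    have := @Tfact i ltac:(lia) => ti.
    have := @Tfact (i + 1) ltac:(lia) => ti'.
    split; [apply: qpos|apply: qneg]; lia.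
  + have n1 : (nn 1 = 1)%N by rewrite /nn; lia.
    have ni : (nn m = 1)%N by rewrite /nn; lia.
    have := @Tfact m ltac:(lia) => ti.
    apply: qpos; lia.
- do 3 right; left; rewrite /rest4 /=; split.
  + by apply: p1pos; lia.
  + by apply: p1neg; lia.
  + by apply: p2pos; lia.
  + by apply: p2neg; lia.
  + move=> i hi; have n1 : (nn 1 = 0)%N by rewrite /nn; lia.
    have ni : (nn i = 1)%N by rewrite /nn; lia.
    have ni' : (nn (i + 1) = 1 + (m + 1 < i + 1))%N by rewrite /nn; lia.
    have := @Tfact i ltac:(lia) => ti.
    have := @Tfact (i + 1) ltac:(lia) => ti'.
    split; [apply: qpos|apply: qneg]; lia.
- do 4 right; left; rewrite /rest5 /=; split.
  + by apply: p1pos; lia.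
  + by apply: p1neg; lia.
  + by apply: p2pos; lia.
  + move=> i hi; have n1 : (nn 1 = 0)%N by rewrite /nn; lia.
    have ni : (nn i = 0)%N by rewrite /nn; lia.
    have ni' : (nn (i + 1) = 0)%N by rewrite /nn; lia.
    have := @Tfact i ltac:(lia) => ti.
    have := @Tfact (i + 1) ltac:(lia) => ti'.
    split; [apply: qpos|apply: qneg]; lia.
  + have n1 : (nn 1 = 0)%N by rewrite /nn; lia.
    have ni : (nn m = 0)%N by rewrite /nn; lia.
    have := @Tfact m ltac:(lia) => ti.
    apply: qpos; lia.
- do 5 right; rewrite /rest6 /=; split.
  + by apply: p1pos; lia.
  + by apply: p1neg; lia.
  + by apply: p2pos; lia.
  + move=> i hi; have n1 : (nn 1 = 0)%N by rewrite /nn; lia.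
    have ni : (nn i = 0)%N by rewrite /nn; lia.
    have := @Tfact i ltac:(lia) => ti.
    split; [apply: qpos|apply: qneg]; lia.
  + have n1 : (nn 1 = 0)%N by rewrite /nn; lia.
    have ni : (nn m = 0)%N by rewrite /nn; lia.
    have := @Tfact m ltac:(lia) => ti.
    apply: qneg; lia.
Qed.
End Inv.


Lemma qpos_mono i0 k0 i k : 0 < Q i0 k0 -> (1 <= i)%N -> (i <= i0)%N -> (i0 <= 2 * m)%N ->
  (1 <= k)%N -> (k <= k0)%N -> (k0 <= 2 * m)%N -> 0 < Q i k.
Proof. by move=> h *; apply: lt_le_trans h _; apply: q_le. Qed.
Arguments qpos_mono [i0 k0 i k].
Lemma qneg_mono i0 k0 i k : Q i0 k0 < 0 -> (1 <= i0)%N -> (i0 <= i)%N -> (i <= 2 * m)%N ->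
  (1 <= k0)%N -> (k0 <= k)%N -> (k <= 2 * m)%N -> Q i k < 0.
Proof. by move=> h *; apply: le_lt_trans _ h; apply: q_le. Qed.
Arguments qneg_mono [i0 k0 i k].

Definition Pat (N : nat) := forall i k, (1 <= i <= 2 * m)%N -> (1 <= k <= 2 * m)%N -> k != i ->
  ((i + k <= N)%N -> 0 < Q i k) /\ ((N < i + k)%N -> Q i k < 0).

Lemma Pat_half N : (forall i k, (1 <= i)%N -> (i < k)%N -> (k <= 2 * m)%N ->
  ((i + k <= N)%N -> 0 < Q i k) /\ ((N < i + k)%N -> Q i k < 0)) -> Pat N.
Proof.
move=> h i k hi hk ki.
case: (ltngtP i k) => ik; last by rewrite ik eqxx in ki.
- by apply: h; lia.
- rewrite (qC i k) addnC; apply: h; lia.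
Qed.

Lemma Pat_2m : (forall i, (1 <= i <= m - 1)%N -> 0 < Q i (2 * m - i) /\ Q i (2 * m + 1 - i) < 0) ->
  Q m (m + 1) < 0 -> Pat (2 * m).
Proof.
move=> h hm; apply: Pat_half => i k i1 ik k2; split => hs.
- have [h1 _] := h i ltac:(lia).
  apply: (qpos_mono h1); lia.
- case: (leqP i (m - 1)) => hi.
  + have [_ h2] := h i ltac:(lia).
    apply: (qneg_mono h2); lia.
  + apply: (qneg_mono hm); lia.
Qed.

Lemma Pat_2m1 : (forall i, (1 <= i <= m - 1)%N -> 0 < Q i (2 * m - 1 - i) /\ Q i (2 * m - i) < 0) ->
  Pat (2 * m - 1).
Proof.
move=> h; apply: Pat_half => i k i1 ik k2; split => hs.
- have [h1 _] := h i ltac:(lia).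
  apply: (qpos_mono h1); lia.
- case: (leqP i (m - 1)) => hi.
  + have [_ h2] := h i ltac:(lia).
    apply: (qneg_mono h2); lia.
  + have [_ h2] := h (m - 1)%N ltac:(lia).
    apply: (qneg_mono h2); lia.
Qed.

Lemma Pat_2m2 : (forall i, (1 <= i <= m - 1)%N -> 0 < Q i (2 * m + 1 - i) /\ Q (i + 1) (2 * m + 1 - i) < 0) ->
  0 < Q m (m + 1) -> Pat (2 * m + 1).
Proof.
move=> h hm; apply: Pat_half => i k i1 ik k2; split => hs.
- case: (leqP i (m - 1)) => hi.
  + have [h1 _] := h i ltac:(lia).
    apply: (qpos_mono h1); lia.
  + apply: (qpos_mono hm); lia.
- case: (leqP i m) => hi.
  + have [_ h2] := h (i - 1)%N ltac:(lia).
    apply: (qneg_mono h2); lia.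
  + have [_ h2] := h (m - 1)%N ltac:(lia).
    apply: (qneg_mono h2); lia.
Qed.

Lemma Pat_2m3 : (forall i, (2 <= i <= m)%N -> 0 < Q i (2 * m + 2 - i) /\ Q (i + 1) (2 * m + 2 - i) < 0) ->
  Pat (2 * m + 2).
Proof.
move=> h; apply: Pat_half => i k i1 ik k2; split => hs.
- case: (leqP i 1) => hi.
  + have [h1 _] := h 2%N ltac:(lia).
    apply: (qpos_mono h1); lia.
  + have [h1 _] := h i ltac:(lia).
    apply: (qpos_mono h1); lia.
- case: (leqP i (m + 1)) => hi.
  + have [_ h2] := h (i - 1)%N ltac:(lia).
    apply: (qneg_mono h2); lia.
  + have [_ h2] := h m ltac:(lia).
    apply: (qneg_mono h2); lia.
Qed.

Lemma pat_NZ N : Pat N -> NZ.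
Proof.
move=> h i k hi hk ki; have [h1 h2] := h i k hi hk ki.
case: (leqP (i + k) N) => hs.
- by rewrite gt_eqF // h1.
- by rewrite lt_eqF // h2.
Qed.
Arguments pat_NZ [N].

Lemma pat_Neg N : Pat N -> forall i, (1 <= i <= 2 * m)%N ->
  Negn i = ((2 * m - (N - i)) - (N - i < i))%N.
Proof.
move=> h i hi; rewrite /Negn -count_gt //.
rewrite big_nat_cond [in RHS]big_nat_cond; apply: eq_bigr => k /andP[hk ki].
have [h1 h2] := h i k hi hk ki.
case: (leqP (i + k) N) => hs.
- have e1 : (Q i k < 0) = false by apply/negbTE; rewrite -leNgt ltW // h1.
  have e2 : (N - i < k)%N = false by apply/negbTE; lia.
  by rewrite e1 e2.
- have e1 : (Q i k < 0) = true by rewrite h2.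
  have e2 : (N - i < k)%N = true by lia.
  by rewrite e1 e2.
Qed.
Arguments pat_Neg [N].

Definition PPat (f : nat -> R) (P : nat) := forall i, (1 <= i <= 2 * m)%N ->
  ((i <= P)%N -> 0 < f i) /\ ((P < i)%N -> f i < 0).

Lemma PPat_mk (f : nat -> R) P :
  (forall i i', (1 <= i)%N -> (i <= i')%N -> (i' <= 2 * m)%N -> f i' <= f i) ->
  (P <= 2 * m)%N -> ((1 <= P)%N -> 0 < f P) -> ((P < 2 * m)%N -> f (P + 1)%N < 0) -> PPat f P.
Proof.
move=> hf hP h1 h2 i hi; split => hiP.
- apply: lt_le_trans (h1 _) (hf _ _ _ _ _); lia.
- apply: le_lt_trans (hf _ _ _ _ _) (h2 _); lia.
Qed.

Lemma PPat_neg f P : PPat f P -> forall i, (1 <= i <= 2 * m)%N ->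
  (f i < 0) = (P < i)%N /\ f i != 0.
Proof.
move=> h i hi; have [h1 h2] := h i hi.
case: (leqP i P) => hs.
- have hh := h1 hs; split; last by rewrite gt_eqF.
  by apply/negbTE; rewrite -leNgt ltW.
- have hh := h2 hs; split; last by rewrite lt_eqF.
  by rewrite hh.
Qed.
Arguments PPat_neg [f P].

Lemma oddE x : odd x = (x %% 2 == 1)%N.
Proof. by rewrite modn2; case: (odd x). Qed.

Lemma good_of N A B (e : bool) : Pat N -> PPat P31 A -> PPat P32 B ->
  (forall i, (1 <= i <= 2 * m)%N ->
     ((i - 1) + ((2 * m - (N - i)) - (N - i < i)) + (A < i) + (B < i)) %% 2 = e)%N ->
  [/\ NZ, NZp & forall i, (1 <= i <= 2 * m)%N -> odd (En i) = e].
Proof.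
move=> hq h1 h2 hpar; split.
- exact: pat_NZ hq.
- by move=> i hi; split; [case: (PPat_neg h1 _ hi)|case: (PPat_neg h2 _ hi)].
- move=> i hi; rewrite /En (pat_Neg hq _ hi).
  case: (PPat_neg h1 _ hi) => -> _; case: (PPat_neg h2 _ hi) => -> _.
  rewrite oddE hpar //; clear hpar; by case: e.
Qed.

Definition Good (e : bool) := [/\ NZ, NZp & forall i, (1 <= i <= 2 * m)%N -> odd (En i) = e].

Lemma p31_dec i i' : (1 <= i)%N -> (i <= i')%N -> (i' <= 2 * m)%N -> P31 i' <= P31 i.
Proof. exact: p31_le. Qed.
Lemma p32_dec i i' : (1 <= i)%N -> (i <= i')%N -> (i' <= 2 * m)%N -> P32 i' <= P32 i.
Proof. exact: p32_le. Qed.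

Lemma rest1_good : rest1 m a1 a2 b1 b2 b3 c -> Good false.
Proof.
rewrite /rest1 /= => -[h1 h2 h3 h4 h5].
apply: (@good_of (2 * m - 1) (m - 1) (2 * m - 1)).
- exact: Pat_2m1.
- apply: PPat_mk; [exact: p31_dec|lia|by []|]; move=> _; rewrite subnK //; lia.
- apply: PPat_mk; [exact: p32_dec|lia|by []|]; move=> _; rewrite subnK //; lia.
- move=> i hi; lia.
Qed.

Lemma rest2_good : rest2 m a1 a2 b1 b2 b3 c -> Good false.
Proof.
rewrite /rest2 /= => -[h1 h2 h3 h4 h5].
apply: (@good_of (2 * m) 0 m).
- exact: Pat_2m.
- apply: PPat_mk; [exact: p31_dec|lia|lia|by []].
- apply: PPat_mk; [exact: p32_dec|lia|by []|by []].
- move=> i hi; lia.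
Qed.

Lemma rest3_good : rest3 m a1 a2 b1 b2 b3 c -> Good true.
Proof.
rewrite /rest3 /= => -[h1 h2 h3 h4 h5].
apply: (@good_of (2 * m + 1) 0 m).
- exact: Pat_2m2.
- apply: PPat_mk; [exact: p31_dec|lia|lia|by []].
- apply: PPat_mk; [exact: p32_dec|lia|by []|by []].
- move=> i hi; lia.
Qed.

Lemma rest4_good : rest4 m a1 a2 b1 b2 b3 c -> Good false.
Proof.
rewrite /rest4 /= => -[h1 h2 h3 h4 h5].
apply: (@good_of (2 * m + 2) 1 (m + 1)).
- exact: Pat_2m3.
- apply: PPat_mk; [exact: p31_dec|lia|by []|by []].
- apply: PPat_mk; [exact: p32_dec|lia|by []|]; move=> _; rewrite -addnA; exact: h4.
- move=> i hi; lia.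
Qed.

Lemma rest5_good : rest5 m a1 a2 b1 b2 b3 c -> Good false.
Proof.
rewrite /rest5 /= => -[h1 h2 h3 h4 h5].
apply: (@good_of (2 * m + 1) m (2 * m)).
- exact: Pat_2m2.
- apply: PPat_mk; [exact: p31_dec|lia|by []|by []].
- apply: PPat_mk; [exact: p32_dec|lia|by []|lia].
- move=> i hi; lia.
Qed.

Lemma rest6_good : rest6 m a1 a2 b1 b2 b3 c -> Good true.
Proof.
rewrite /rest6 /= => -[h1 h2 h3 h4 h5].
apply: (@good_of (2 * m) m (2 * m)).
- exact: Pat_2m.
- apply: PPat_mk; [exact: p31_dec|lia|by []|by []].
- apply: PPat_mk; [exact: p32_dec|lia|by []|lia].
- move=> i hi; lia.
Qed.

Lemma sum0 (F : nat -> R) a b : \sum_(a <= i < b) F i = \sum_(0 <= i < b - a) F (i + a)%N.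
Proof. by rewrite -{1}[a]add0n big_addn. Qed.

Lemma sum_rev (F : nat -> R) a b s : (a <= b)%N -> (b <= s + 1)%N ->
  \sum_(a <= i < b) F (s - i)%N = \sum_(s + 1 - b <= j < s + 1 - a) F j.
Proof.
move=> ab bs; rewrite [LHS]sum0 [RHS]sum0.
have -> : (s + 1 - a - (s + 1 - b) = b - a)%N by lia.
rewrite [RHS]big_nat_rev.
apply: eq_big_nat => i hi; congr F; lia.
Qed.

Lemma sum_pos (F : nat -> R) a b : (a < b)%N -> (forall i, (a <= i < b)%N -> 0 < F i) ->
  0 < \sum_(a <= i < b) F i.
Proof.
move=> ab h; rewrite big_ltn //; apply: ltr_wpDr; last by apply: h; lia.
rewrite big_nat_cond; apply: sumr_ge0 => i /andP[hi _]; apply: ltW; apply: h; lia.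
Qed.

Lemma sum_neg (F : nat -> R) a b : (a < b)%N -> (forall i, (a <= i < b)%N -> F i < 0) ->
  \sum_(a <= i < b) F i < 0.
Proof.
move=> ab h; rewrite -oppr_gt0 -sumrN; apply: sum_pos => // i hi.
by rewrite oppr_gt0; apply: h.
Qed.

Definition Sc := \sum_(1 <= i < (2 * m).+1) c i.

Lemma split_Sc : Sc = \sum_(1 <= i < m.+1) c i + \sum_(m.+1 <= i < (2 * m).+1) c i.
Proof. by rewrite /Sc (@big_cat_nat _ _ _ m.+1) //; lia. Qed.

Lemma SA : \sum_(1 <= i < m.+1) (c i + c (2 * m + 1 - i)%N) = Sc.
Proof.
rewrite big_split /= split_Sc (@sum_rev c 1 m.+1 (2 * m + 1)); try lia.
have -> : (2 * m + 1 + 1 - m.+1 = m.+1)%N by lia.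
by have -> : (2 * m + 1 + 1 - 1 = (2 * m).+1)%N by lia.
Qed.

Lemma SB : \sum_(1 <= i < m) (c i + c (2 * m - i)%N) + c m + c (2 * m)%N = Sc.
Proof.
rewrite big_split /= (@sum_rev c 1 m (2 * m)); try lia.
have -> : (2 * m + 1 - m = m.+1)%N by lia.
have -> : (2 * m + 1 - 1 = 2 * m)%N by lia.
have e1 : \sum_(1 <= i < m.+1) c i = \sum_(1 <= i < m) c i + c m.
  by rewrite big_nat_recr //=; lia.
have e2 : \sum_(m.+1 <= i < (2 * m).+1) c i = \sum_(m.+1 <= i < 2 * m) c i + c (2 * m)%N.
  by rewrite big_nat_recr //=; lia.
rewrite split_Sc e1 e2; lra.
Qed.

Lemma SC : \sum_(1 <= i < m) (c (i + 1)%N + c (2 * m + 1 - i)%N) + c 1%N + c (m + 1)%N = Sc.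
Proof.
rewrite big_split /= (@sum_rev c 1 m (2 * m + 1)); try lia.
have -> : (2 * m + 1 + 1 - m = m + 2)%N by lia.
have -> : (2 * m + 1 + 1 - 1 = (2 * m).+1)%N by lia.
have e1 : \sum_(1 <= i < m) c (i + 1)%N = \sum_(2 <= i < m.+1) c i.
  by rewrite (big_addn 1 m.+1 1); have -> : (m.+1 - 1 = m)%N by lia.
have e2 : \sum_(1 <= i < m.+1) c i = c 1%N + \sum_(2 <= i < m.+1) c i.
  by rewrite big_ltn //; lia.
have e3 : \sum_(m.+1 <= i < (2 * m).+1) c i = c (m + 1)%N + \sum_(m + 2 <= i < (2 * m).+1) c i.
  by rewrite big_ltn ?addn1 ?addn2 //; lia.
rewrite e1 split_Sc e2 e3; lra.
Qed.

Lemma SD : \sum_(2 <= i < m.+1) (c i + c (2 * m + 2 - i)%N) + c 1%N + c (m + 1)%N = Sc.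
Proof.
rewrite big_split /= (@sum_rev c 2 m.+1 (2 * m + 2)); try lia.
have -> : (2 * m + 2 + 1 - m.+1 = m.+2)%N by lia.
have -> : (2 * m + 2 + 1 - 2 = (2 * m).+1)%N by lia.
have e2 : \sum_(1 <= i < m.+1) c i = c 1%N + \sum_(2 <= i < m.+1) c i.
  by rewrite big_ltn //; lia.
have e3 : \sum_(m.+1 <= i < (2 * m).+1) c i = c (m + 1)%N + \sum_(m.+2 <= i < (2 * m).+1) c i.
  by rewrite big_ltn ?addn1 //; lia.
rewrite split_Sc e2 e3; lra.
Qed.

Definition Kq := b2 + b3 - a1 - a2.

Lemma sumQ (F G : nat -> nat) a b : (a <= b)%N ->
  \sum_(a <= i < b) Q (F i) (G i) = \sum_(a <= i < b) (c (F i) + c (G i)) + (b - a)%:R * Kq.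
Proof.
move=> ab.
have -> : \sum_(a <= i < b) Q (F i) (G i) = \sum_(a <= i < b) ((c (F i) + c (G i)) + Kq).
  by apply: eq_bigr => i _; rewrite /q /Kq; ring.
by rewrite big_split /= sumr_const_nat mulr_natl.
Qed.

Lemma qP i k : Q i k = P31 i + P32 k + (b2 - b3).
Proof. rewrite /q /p31 /p32; ring. Qed.

Section Bord.
Hypothesis hs : m%:R * a1 + m%:R * a2 = b1 + (m - 1)%:R * b2 + m%:R * b3 + Sc.

Lemma natm1 : (m - 1)%:R = m%:R - 1 :> R.
Proof. by rewrite natrB //; lia. Qed.

Lemma sumA_val : \sum_(1 <= i < m.+1) Q i (2 * m + 1 - i)%N = b2 - b1.
Proof.
rewrite (@sumQ id (fun i => 2 * m + 1 - i)%N) //= SA subSS subn0.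
move: hs; rewrite natm1 /Kq => h; lra.
Qed.

Lemma sumB_val : \sum_(1 <= i < m) Q i (2 * m - i)%N + P31 m + P32 (2 * m)%N = b3 - b1.
Proof.
rewrite (@sumQ id (fun i => 2 * m - i)%N) /=; last lia.
have := SB; rewrite /p31 /p32 => h.
move: hs; rewrite natm1 /Kq => h'; lra.
Qed.

Lemma sumC_val : \sum_(1 <= i < m) Q (i + 1)%N (2 * m + 1 - i)%N + P31 1%N + P32 (m + 1)%N = b3 - b1.
Proof.
rewrite (@sumQ (fun i => i + 1)%N (fun i => 2 * m + 1 - i)%N) /=; last lia.
have := SC; rewrite /p31 /p32 => h.
move: hs; rewrite natm1 /Kq => h'; lra.
Qed.

Lemma sumD_val : \sum_(2 <= i < m.+1) Q i (2 * m + 2 - i)%N + P31 1%N + P32 (m + 1)%N = b3 - b1.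
Proof.
rewrite (@sumQ id (fun i => 2 * m + 2 - i)%N) /=; last lia.
have := SD; rewrite /p31 /p32 => h.
have -> : (m.+1 - 2 = m - 1)%N by lia.
move: hs; rewrite natm1 /Kq => h'; lra.
Qed.

Lemma bord_of1 : rest1 m a1 a2 b1 b2 b3 c -> bord1 m a1 a2 b1 b2 b3 c.
Proof.
rewrite /rest1 /bord1 /= => -[h1 h2 h3 h4 h5]; split.
- have hsum : \sum_(1 <= i < m) Q i (2 * m - i)%N < 0.
    by apply: sum_neg => [|i hi]; [lia|case: (h5 i ltac:(lia))].
  have := sumB_val; lra.
- have [_ hq] := h5 (m - 1)%N ltac:(lia).
  have e : (2 * m - (m - 1) = m + 1)%N by lia.
  rewrite e qP in hq.
  have hp : P32 (2 * m - 1)%N <= P32 (m + 1)%N by apply: p32_le; lia.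
  lra.
Qed.

Lemma bord_of2 : rest2 m a1 a2 b1 b2 b3 c -> bord2 m a1 a2 b1 b2 b3 c.
Proof.
rewrite /rest2 /bord2 /= => -[h1 h2 h3 h4 h5]; split.
- have hsum : \sum_(1 <= i < m.+1) Q i (2 * m + 1 - i)%N < 0.
    apply: sum_neg => [|i hi]; first lia.
    case: (ltnP i m) => him; first by case: (h4 i ltac:(lia)).
    have -> : i = m by lia.
    by have -> : (2 * m + 1 - m = m + 1)%N by lia.
  have := sumA_val; lra.
- have [hq _] := h4 1%N ltac:(lia).
  rewrite qP in hq.
  have hp : P32 (2 * m - 1)%N <= P32 (m + 1)%N by apply: p32_le; lia.
  lra.
Qed.

Lemma bord_of3 : rest3 m a1 a2 b1 b2 b3 c -> bord3 m a1 a2 b1 b2 b3 c.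
Proof.
rewrite /rest3 /bord3 /= => -[h1 h2 h3 h4 h5]; split.
- have hsum : 0 < \sum_(1 <= i < m.+1) Q i (2 * m + 1 - i)%N.
    apply: sum_pos => [|i hi]; first lia.
    case: (ltnP i m) => him; first by case: (h4 i ltac:(lia)).
    have -> : i = m by lia.
    by have -> : (2 * m + 1 - m = m + 1)%N by lia.
  have := sumA_val; lra.
- have hsum : \sum_(1 <= i < m) Q (i + 1)%N (2 * m + 1 - i)%N < 0.
    by apply: sum_neg => [|i hi]; [lia|case: (h4 i ltac:(lia))].
  have := sumC_val; lra.
Qed.

Lemma bord_of4 : rest4 m a1 a2 b1 b2 b3 c -> bord4 m a1 a2 b1 b2 b3 c.
Proof.
rewrite /rest4 /bord4 /= => -[h1 h2 h3 h4 h5]; split.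
- have [hq _] := h5 2%N ltac:(lia).
  have e : (2 * m + 2 - 2 = 2 * m)%N by lia.
  rewrite e qP in hq.
  have hp : P32 (2 * m)%N <= P32 (m + 2)%N by apply: p32_le; lia.
  lra.
- have hsum : 0 < \sum_(2 <= i < m.+1) Q i (2 * m + 2 - i)%N.
    by apply: sum_pos => [|i hi]; [lia|case: (h5 i ltac:(lia))].
  have := sumD_val; lra.
Qed.

Lemma bord_of5 : rest5 m a1 a2 b1 b2 b3 c -> bord5 m a1 a2 b1 b2 b3 c.
Proof.
rewrite /rest5 /bord5 /= => -[h1 h2 h3 h4 h5]; split.
- have [_ hq] := h4 1%N ltac:(lia).
  have e : (2 * m + 1 - 1 = 2 * m)%N by lia.
  rewrite e qP in hq.
  have hp : P31 m <= P31 (1 + 1)%N by apply: p31_le; lia.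
  lra.
- have hsum : 0 < \sum_(1 <= i < m.+1) Q i (2 * m + 1 - i)%N.
    apply: sum_pos => [|i hi]; first lia.
    case: (ltnP i m) => him; first by case: (h4 i ltac:(lia)).
    have -> : i = m by lia.
    by have -> : (2 * m + 1 - m = m + 1)%N by lia.
  have := sumA_val; lra.
Qed.

Lemma bord_of6 : rest6 m a1 a2 b1 b2 b3 c -> bord6 m a1 a2 b1 b2 b3 c.
Proof.
rewrite /rest6 /bord6 /= => -[h1 h2 h3 h4 h5]; split.
- have hsum : 0 < \sum_(1 <= i < m) Q i (2 * m - i)%N.
    by apply: sum_pos => [|i hi]; [lia|case: (h4 i ltac:(lia))].
  have := sumB_val; lra.
- have hsum : \sum_(1 <= i < m.+1) Q i (2 * m + 1 - i)%N < 0.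
    apply: sum_neg => [|i hi]; first lia.
    case: (ltnP i m) => him; first by case: (h4 i ltac:(lia)).
    have -> : i = m by lia.
    by have -> : (2 * m + 1 - m = m + 1)%N by lia.
  have := sumA_val; lra.
Qed.
End Bord.

Lemma prod_sg (I : eqType) (r : seq I) (P : pred I) (F : I -> R) :
  (forall x, x \in r -> P x -> F x != 0) ->
  Num.sg (\prod_(x <- r | P x) F x) = (-1) ^+ (\sum_(x <- r | P x) ((F x < 0)%R : nat))%N.
Proof.
elim: r => [|x r IH] h; first by rewrite !big_nil sgr1.
rewrite !big_cons; case: (boolP (P x)) => px; last first.
  by apply: IH => y yr py; apply: h => //; rewrite in_cons yr orbT.
rewrite sgrM exprD IH; last by move=> y yr py; apply: h => //; rewrite in_cons yr orbT.
have := h x (mem_head _ _) px; case: ltgtP => // hx _.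
- by rewrite ltr0_sg.
- by rewrite gtr0_sg.
Qed.

Lemma prod_sg_nat a b (P : pred nat) (F : nat -> R) :
  (forall k, (a <= k < b)%N -> P k -> F k != 0) ->
  Num.sg (\prod_(a <= k < b | P k) F k) = (-1) ^+ (\sum_(a <= k < b | P k) ((F k < 0)%R : nat))%N.
Proof. by move=> h; apply: prod_sg => k; rewrite mem_index_iota; apply: h. Qed.

Lemma dval_sg i : NZ -> NZp -> (1 <= i <= 2 * m)%N ->
  Num.sg (dval m a1 a2 b1 b2 b3 c i) = (-1) ^+ En i.
Proof.
move=> nz nzp hi; have [n1 n2] := nzp i hi.
rewrite /dval !sgrM !sgrV.
rewrite prod_sg_nat; last by move=> k hk _; rewrite subr_eq0; apply/eqP => e;
  have := @c_lt i k ltac:(lia) ltac:(lia) ltac:(lia); rewrite e ltxx.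
rewrite prod_sg_nat; last by move=> k hk _; rewrite subr_eq0; apply/eqP => e;
  have := @c_lt k i ltac:(lia) ltac:(lia) ltac:(lia); rewrite e ltxx.
rewrite prod_sg_nat; last by move=> k hk ki; apply: nz => //; lia.
rewrite prod_sg_nat; last by move=> k hk ki; apply: nz => //; lia.
have eA : (\sum_((i + 1)%N <= k < (2 * m).+1) ((c i - c k < 0)%R : nat) = 0)%N.
  rewrite big_nat_cond; apply: big1 => k /andP[hk _].
  have := @c_lt i k ltac:(lia) ltac:(lia) ltac:(lia); rewrite -subr_gt0.
  by move/lt_gtF => ->.
have eB : (\sum_(1 <= k < i) ((c i - c k < 0)%R : nat) = i - 1)%N.
  rewrite big_nat_cond (eq_bigr (fun _ => 1%N)); last first.
    move=> k /andP[hk _]; have := @c_lt k i ltac:(lia) ltac:(lia) ltac:(lia).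
    by rewrite -subr_lt0 => ->.
  by rewrite -big_nat_cond sum_nat_const_nat muln1.
have eN : (\sum_((2 * m + 1 - i)%N <= k < (2 * m).+1 | k != i) ((Q i k < 0)%R : nat) +
           \sum_(1 <= k < (2 * m - i).+1 | k != i) ((Q i k < 0)%R : nat) = Negn i)%N.
  have -> : ((2 * m - i).+1 = 2 * m + 1 - i)%N by lia.
  by rewrite /Negn addnC -big_cat_nat //; lia.
have eP : Num.sg (if (i <= m)%N then P31 i / P32 i else P31 i * P32 i) =
          (-1) ^+ ((P31 i < 0)%R + (P32 i < 0)%R)%N.
  have s1 : Num.sg (P31 i) = (-1) ^+ ((P31 i < 0)%R : nat).
    by case: ltgtP n1 => // h _; [rewrite ltr0_sg|rewrite gtr0_sg].
  have s2 : Num.sg (P32 i) = (-1) ^+ ((P32 i < 0)%R : nat).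
    by case: ltgtP n2 => // h _; [rewrite ltr0_sg|rewrite gtr0_sg].
  by case: ifP => _; rewrite sgrM ?sgrV s1 s2 exprD.
rewrite eP eA eB expr0 mul1r /En -eN !exprD.
ring.
Qed.

Lemma mulmx_entry n p k (A : 'M[R]_(n, p)) (B : 'M[R]_(p, k)) i j :
  (A *m B) i j = (row i A *m col j B) 0 0.
Proof. by rewrite !mxE; apply: eq_bigr => l _; rewrite !mxE. Qed.

Section LinAlg.
Variable v : nat -> 'cV[R]_(2 * m).
Hypothesis hv0 : forall i, (1 <= i <= 2 * m)%N ->
  forall r : 'I_(2 * m), (r < 2 * m - i)%N -> v i r 0 = 0.
Hypothesis hv1 : forall i, (1 <= i <= 2 * m)%N ->
  forall r : 'I_(2 * m), nat_of_ord r = (2 * m - i)%N -> v i r 0 = 1.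

Definition Vm : 'M[R]_(2 * m) := \matrix_(r, j) v (2 * m - j)%N r 0.

Lemma col_Vm (j : 'I_(2 * m)) : col j Vm = v (2 * m - j)%N.
Proof. by apply/matrixP => r s; rewrite !mxE (ord1 s). Qed.

Lemma Vm_unit : Vm \in unitmx.
Proof.
rewrite unitmxE det_trig.
  rewrite (eq_bigr (fun _ => 1)) ?prodr_const ?expr1n ?unitr1 // => j _.
  by rewrite mxE; apply: hv1; have := ltn_ord j; lia.
apply/is_trig_mxP => r j rj; rewrite mxE; apply: hv0; have := ltn_ord j; lia.
Qed.

Lemma posdef_iff (H : 'M[R]_(2 * m)) (w : nat -> R) :
  (forall i j, (1 <= i <= 2 * m)%N -> (1 <= j <= 2 * m)%N ->
     bform H (v i) (v j) = if i == j then w i else 0) ->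
  pos_definite H <-> (forall i, (1 <= i <= 2 * m)%N -> 0 < w i).
Proof.
move=> hH; split.
- move=> hp i hi; have := hH i i hi hi; rewrite eqxx => <-.
  apply: hp; apply/eqP => e.
  have hr : (2 * m - i < 2 * m)%N by lia.
  have := hv1 i hi (Ordinal hr) erefl; rewrite e mxE => /eqP; rewrite eq_sym oner_eq0.
  by [].
- move=> hw x xn0.
  have [a xa] : exists a, x = Vm *m a.
    by exists (invmx Vm *m x); rewrite mulKVmx // Vm_unit.
  have an0 : a != 0 by apply: contraNneq xn0 => a0; rewrite xa a0 mulmx0.
  pose d : 'rV[R]_(2 * m) := \row_j w (2 * m - j)%N.
  have hD : Vm^T *m H *m Vm = diag_mx d.
    apply/matrixP => j j'; rewrite mulmx_entry row_mul -tr_col !col_Vm.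
    have := hH (2 * m - j)%N (2 * m - j')%N; rewrite /bform => ->; first last.
      by have := ltn_ord j'; lia.
      by have := ltn_ord j; lia.
    rewrite !mxE.
    case: (eqVneq j j') => [->|jj]; first by rewrite eqxx.
    have -> : ((2 * m - j)%N == (2 * m - j')%N) = false.
      apply/negbTE; apply: contra jj => /eqP e; apply/eqP; apply: val_inj => /=.
      by have := ltn_ord j; have := ltn_ord j'; lia.
    by rewrite mulr0n.
  have -> : bform H x x = (a^T *m diag_mx d *m a) 0 0.
    by rewrite /bform xa trmx_mul -hD !mulmxA.
  rewrite mul_mx_diag mxE.
  have e : forall k, (\matrix_(i, j1) (a^T i j1 * d 0 j1)) 0 k * a k 0 = a k 0 ^+ 2 * w (2 * m - k)%N.
    by move=> k; rewrite !mxE; ring.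
  under eq_bigr do rewrite e.
  have [j aj] : exists j, a j 0 != 0.
    apply/existsP; apply: contraNT an0 => /existsPn h.
    apply/eqP/matrixP => r s; rewrite (ord1 s) [RHS]mxE.
    by move: (h r); rewrite negbK => /eqP.
  rewrite (bigD1 j) //=; apply: ltr_pwDl.
  + apply: mulr_gt0; first by rewrite exprn_even_gt0.
    by apply: hw; have := ltn_ord j; lia.
  + apply: sumr_ge0 => k _; apply: mulr_ge0; first exact: sqr_ge0.
    by apply: ltW; apply: hw; have := ltn_ord k; lia.
Qed.
End LinAlg.

Local Notation D := (dval m a1 a2 b1 b2 b3 c).

Lemma bformZ n e (H : 'M[R]_n) x y : bform (e *: H) x y = e * bform H x y.
Proof. by rewrite /bform -scalemxAr -scalemxAl mxE. Qed.

Lemma dval_nz i : (1 <= i <= 2 * m)%N -> D i != 0 ->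
  [/\ forall k, (1 <= k <= 2 * m)%N -> k != i -> Q i k != 0, P31 i != 0 & P32 i != 0].
Proof.
move=> hi; rewrite /dval !mulf_eq0 !negb_or !invr_eq0 => /andP[/andP[_ /andP[hC hD]] hP].
rewrite !prodf_seq_neq0 in hC hD.
have hp : P31 i != 0 /\ P32 i != 0.
  by move: hP; case: ifP => _; rewrite ?mulf_eq0 ?invr_eq0 negb_or => /andP[].
split; try by case: hp.
move=> k hk ki; case: (leqP k (2 * m - i)) => hki.
- have : k \in index_iota 1 (2 * m - i).+1 by rewrite mem_index_iota; lia.
  by move=> kin; move/allP: hD => /(_ k kin); rewrite ki.
- have : k \in index_iota (2 * m + 1 - i) (2 * m).+1 by rewrite mem_index_iota; lia.
  by move=> kin; move/allP: hC => /(_ k kin); rewrite ki.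
Qed.

Lemma odd_of_sg (x : R) n : Num.sg x = (-1) ^+ n ->
  (0 < x -> odd n = false) /\ (x < 0 -> odd n = true).
Proof.
rewrite -signr_odd; case: (odd n) => /= h; split => // hx.
- by move: h; rewrite gtr0_sg // => h; exfalso; move: h; lra.
- by move: h; rewrite ltr0_sg // expr0 => h; exfalso; move: h; lra.
Qed.

Definition Cases := 
  (bord1 m a1 a2 b1 b2 b3 c /\ rest1 m a1 a2 b1 b2 b3 c) \/
  (bord2 m a1 a2 b1 b2 b3 c /\ rest2 m a1 a2 b1 b2 b3 c) \/
  (bord3 m a1 a2 b1 b2 b3 c /\ rest3 m a1 a2 b1 b2 b3 c) \/
  (bord4 m a1 a2 b1 b2 b3 c /\ rest4 m a1 a2 b1 b2 b3 c) \/
  (bord5 m a1 a2 b1 b2 b3 c /\ rest5 m a1 a2 b1 b2 b3 c) \/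
  (bord6 m a1 a2 b1 b2 b3 c /\ rest6 m a1 a2 b1 b2 b3 c).

Lemma good_sg (e : bool) : Good e -> forall i, (1 <= i <= 2 * m)%N -> Num.sg (D i) = (-1) ^+ e.
Proof.
move=> [nz nzp hp] i hi; rewrite dval_sg // -signr_odd hp //.
Qed.

Lemma sg_pos_neg (e : bool) : (forall i, (1 <= i <= 2 * m)%N -> Num.sg (D i) = (-1) ^+ e) ->
  (forall i, (1 <= i <= 2 * m)%N -> 0 < D i) \/ (forall i, (1 <= i <= 2 * m)%N -> D i < 0).
Proof.
move=> h0; case: e h0 => h; [right|left] => i hi; have := h i hi.
- by move/eqP; rewrite expr1 sgr_cp0.
- by move/eqP; rewrite expr0 sgr_cp0.
Qed.

Section Final.
Hypothesis hs : m%:R * a1 + m%:R * a2 = b1 + (m - 1)%:R * b2 + m%:R * b3 + Sc.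

Lemma cases_good : Cases -> exists e, Good e /\
   (-1) ^+ e = Num.sg ((b1 - b2) * (b1 - b3)).
Proof.
rewrite /Cases /bord1 /bord2 /bord3 /bord4 /bord5 /bord6.
case=> [[[h1 h2] r]|[[[h1 h2] r]|[[[h1 h2] r]|[[[h1 h2] r]|[[[h1 h2] r]|[[h1 h2] r]]]]]].
- exists false; split; first exact: rest1_good.
  by rewrite expr0 gtr0_sg //; apply: mulr_gt0; lra.
- exists false; split; first exact: rest2_good.
  by rewrite expr0 gtr0_sg //; apply: mulr_gt0; lra.
- exists true; split; first exact: rest3_good.
  by rewrite expr1 ltr0_sg //; rewrite -oppr_gt0 -mulNr; apply: mulr_gt0; lra.
- exists false; split; first exact: rest4_good.
  by rewrite expr0 gtr0_sg //; rewrite -mulrNN; apply: mulr_gt0; lra.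
- exists false; split; first exact: rest5_good.
  by rewrite expr0 gtr0_sg //; rewrite -mulrNN; apply: mulr_gt0; lra.
- exists true; split; first exact: rest6_good.
  by rewrite expr1 ltr0_sg //; rewrite -oppr_gt0 -mulrN; apply: mulr_gt0; lra.
Qed.

Lemma same_sign_cases :
  (forall i, (1 <= i <= 2 * m)%N -> 0 < D i) \/ (forall i, (1 <= i <= 2 * m)%N -> D i < 0) ->
  Cases.
Proof.
move=> hsame.
have hnz : forall i, (1 <= i <= 2 * m)%N -> D i != 0.
  by move=> i hi; case: hsame => h; [rewrite gt_eqF ?h|rewrite lt_eqF ?h].
have nz : NZ.
  by move=> i k hi hk ki; have [h _ _] := @dval_nz i hi (hnz i hi); apply: h.
have nzp : NZp.
  by move=> i hi; have [_ h1 h2] := @dval_nz i hi (hnz i hi).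
have par : forall i, (1 <= i <= 2 * m)%N -> odd (En i) = odd (En 1).
  move=> i hi; have h1 : (1 <= 1 <= 2 * m)%N by lia.
  have si := @odd_of_sg _ _ (@dval_sg i nz nzp hi); have s1 := @odd_of_sg _ _ (@dval_sg 1%N nz nzp h1).
  case: hsame => h.
  + by rewrite (proj1 si (h i hi)) (proj1 s1 (h 1%N h1)).
  + by rewrite (proj2 si (h i hi)) (proj2 s1 (h 1%N h1)).
have := all_rest nz nzp par.
rewrite /Cases.
case=> [r|[r|[r|[r|[r|r]]]]].
- by left; split => //; apply: bord_of1.
- by right; left; split => //; apply: bord_of2.
- by do 2 right; left; split => //; apply: bord_of3.
- by do 3 right; left; split => //; apply: bord_of4.
- by do 4 right; left; split => //; apply: bord_of5.
- by do 5 right; split => //; apply: bord_of6.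
Qed.

Lemma main_sec (v : nat -> 'cV[R]_(2 * m)) (G : 'M[R]_(2 * m)) :
  (forall i, (1 <= i <= 2 * m)%N ->
     [/\ Cmat m a1 a2 b1 b2 b3 c *m v i = c i *: v i,
         (forall r : 'I_(2 * m), (r < 2 * m - i)%N -> v i r 0 = 0) &
         (forall r : 'I_(2 * m), nat_of_ord r = (2 * m - i)%N -> v i r 0 = 1)]) ->
  (forall i j, (1 <= i <= 2 * m)%N -> (1 <= j <= 2 * m)%N ->
     bform G (v i) (v j) = if i == j then dval m a1 a2 b1 b2 b3 c i else 0) ->
  [/\ (sign_definite G <->
        (bord1 m a1 a2 b1 b2 b3 c /\ rest1 m a1 a2 b1 b2 b3 c) \/
        (bord2 m a1 a2 b1 b2 b3 c /\ rest2 m a1 a2 b1 b2 b3 c) \/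
        (bord3 m a1 a2 b1 b2 b3 c /\ rest3 m a1 a2 b1 b2 b3 c) \/
        (bord4 m a1 a2 b1 b2 b3 c /\ rest4 m a1 a2 b1 b2 b3 c) \/
        (bord5 m a1 a2 b1 b2 b3 c /\ rest5 m a1 a2 b1 b2 b3 c) \/
        (bord6 m a1 a2 b1 b2 b3 c /\ rest6 m a1 a2 b1 b2 b3 c)),
      (forall eps : R, eps = 1 \/ eps = -1 ->
         pos_definite (eps *: G) -> eps = Num.sg ((b1 - b2) * (b1 - b3))) &
      ((rest1 m a1 a2 b1 b2 b3 c -> bord1 m a1 a2 b1 b2 b3 c) /\
       (rest2 m a1 a2 b1 b2 b3 c -> bord2 m a1 a2 b1 b2 b3 c) /\
       (rest3 m a1 a2 b1 b2 b3 c -> bord3 m a1 a2 b1 b2 b3 c) /\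
       (rest4 m a1 a2 b1 b2 b3 c -> bord4 m a1 a2 b1 b2 b3 c) /\
       (rest5 m a1 a2 b1 b2 b3 c -> bord5 m a1 a2 b1 b2 b3 c) /\
       (rest6 m a1 a2 b1 b2 b3 c -> bord6 m a1 a2 b1 b2 b3 c))].
Proof.
move=> hv hG.
have hv0 : forall i, (1 <= i <= 2 * m)%N ->
    forall r : 'I_(2 * m), (r < 2 * m - i)%N -> v i r 0 = 0.
  by move=> i hi; case: (hv i hi).
have hv1 : forall i, (1 <= i <= 2 * m)%N ->
    forall r : 'I_(2 * m), nat_of_ord r = (2 * m - i)%N -> v i r 0 = 1.
  by move=> i hi; case: (hv i hi).
have PD : forall e : R, pos_definite (e *: G) <-> (forall i, (1 <= i <= 2 * m)%N -> 0 < e * D i).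
  move=> e; apply: (@posdef_iff v hv0 hv1) => i j hi hj.
  by rewrite bformZ hG //; case: (i == j); rewrite ?mulr0.
have P1 : pos_definite G <-> (forall i, (1 <= i <= 2 * m)%N -> 0 < D i).
  rewrite -(scale1r G) PD; split => h i hi; have := h i hi; lra.
have N1 : neg_definite G <-> (forall i, (1 <= i <= 2 * m)%N -> D i < 0).
  have : neg_definite G <-> pos_definite ((-1) *: G).
    by split => h x xn; have := h x xn; rewrite bformZ; lra.
  move=> ->; rewrite PD; split => h i hi; have := h i hi; lra.
have SD : sign_definite G <-> (forall i, (1 <= i <= 2 * m)%N -> 0 < D i) \/
                               (forall i, (1 <= i <= 2 * m)%N -> D i < 0).
  by rewrite /sign_definite P1 N1.
have hCases : sign_definite G <-> Cases.
  rewrite SD; split; first exact: same_sign_cases.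
  move=> hc0; have [e [he _]] := cases_good hc0.
  exact: (@sg_pos_neg e (@good_sg e he)).
split.
- exact: hCases.
- move=> eps heps /PD hpd.
  have hsame : (forall i, (1 <= i <= 2 * m)%N -> 0 < D i) \/
               (forall i, (1 <= i <= 2 * m)%N -> D i < 0).
    move: hpd; case: heps => -> hpd; [left|right] => i hi; have := hpd i hi; lra.
  have [e [he hsg]] := cases_good (same_sign_cases hsame).
  have h1 : (1 <= 1 <= 2 * m)%N by lia.
  rewrite -hsg -(@good_sg e he 1%N h1).
  have := hpd 1%N h1; case: heps => -> hd.
  + by rewrite gtr0_sg //; lra.
  + by rewrite ltr0_sg //; lra.
- split; [exact: bord_of1|split; [exact: bord_of2|split; [exact: bord_of3|
    split; [exact: bord_of4|split; [exact: bord_of5|exact: bord_of6]]]]].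
Qed.
End Final.
End Main.

Theorem theorem2p14 (R : realFieldType) (m : nat) (a1 a2 b1 b2 b3 : R)
  (c : nat -> R) (v : nat -> 'cV[R]_(2 * m)) (G : 'M[R]_(2 * m)) :
  (2 <= m)%N ->
  a1 > a2 ->
  b1 != b2 -> b1 != b3 -> b2 != b3 ->
  (forall i, (1 <= i < 2 * m)%N -> c i > c i.+1) ->
  m%:R * a1 + m%:R * a2 =
    b1 + (m - 1)%:R * b2 + m%:R * b3 + \sum_(1 <= i < (2 * m).+1) c i ->
  (* well-definedness: no denominator vanishes *)
  (forall i k, (1 <= i <= 2 * m)%N -> (1 <= k <= 2 * m - i)%N -> k != i ->
     q m a1 a2 b1 b2 b3 c i k != 0) ->
  (forall i, (1 <= i <= m)%N -> p32 m a1 a2 b1 b2 b3 c i != 0) ->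
  (* v_i: eigenvector of C for c_i, first 2m-i coordinates 0, (2m+1-i)-th = 1 *)
  (forall i, (1 <= i <= 2 * m)%N ->
     [/\ Cmat m a1 a2 b1 b2 b3 c *m v i = c i *: v i,
         (forall r : 'I_(2 * m), (r < 2 * m - i)%N -> v i r 0 = 0) &
         (forall r : 'I_(2 * m), nat_of_ord r = (2 * m - i)%N -> v i r 0 = 1)]) ->
  (* the form: <v_i, v_j> = 0 (i <> j), <v_i, v_i> = dval i *)
  (forall i j, (1 <= i <= 2 * m)%N -> (1 <= j <= 2 * m)%N ->
     bform G (v i) (v j) = if i == j then dval m a1 a2 b1 b2 b3 c i else 0) ->
  [/\ (sign_definite G <->
        (bord1 m a1 a2 b1 b2 b3 c /\ rest1 m a1 a2 b1 b2 b3 c) \/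
        (bord2 m a1 a2 b1 b2 b3 c /\ rest2 m a1 a2 b1 b2 b3 c) \/
        (bord3 m a1 a2 b1 b2 b3 c /\ rest3 m a1 a2 b1 b2 b3 c) \/
        (bord4 m a1 a2 b1 b2 b3 c /\ rest4 m a1 a2 b1 b2 b3 c) \/
        (bord5 m a1 a2 b1 b2 b3 c /\ rest5 m a1 a2 b1 b2 b3 c) \/
        (bord6 m a1 a2 b1 b2 b3 c /\ rest6 m a1 a2 b1 b2 b3 c)),
      (forall eps : R, eps = 1 \/ eps = -1 ->
         pos_definite (eps *: G) -> eps = Num.sg ((b1 - b2) * (b1 - b3))) &
      ((rest1 m a1 a2 b1 b2 b3 c -> bord1 m a1 a2 b1 b2 b3 c) /\
       (rest2 m a1 a2 b1 b2 b3 c -> bord2 m a1 a2 b1 b2 b3 c) /\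
       (rest3 m a1 a2 b1 b2 b3 c -> bord3 m a1 a2 b1 b2 b3 c) /\
       (rest4 m a1 a2 b1 b2 b3 c -> bord4 m a1 a2 b1 b2 b3 c) /\
       (rest5 m a1 a2 b1 b2 b3 c -> bord5 m a1 a2 b1 b2 b3 c) /\
       (rest6 m a1 a2 b1 b2 b3 c -> bord6 m a1 a2 b1 b2 b3 c))].
Proof.
move=> m2 ha _ _ _ hc hs _ _ hv hG.
exact: (@main_sec R m a1 a2 b1 b2 b3 c m2 ha hc hs v G hv hG).
Qed.
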